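(* (Feinstein lemma for noisy computation.) Let $A$ and $C$ be standard alphabets and $B$ a countable standard alphabet. Let $[A,f\times F,B\times C]$ be a noisy computation and $[A,X]$ a source with $P_{f(X)F(X)}\ll P_{f(X)}\times P_{F(X)}$. Let $i_{f(X)F(X)}=\ln\frac{dP_{f(X)F(X)}}{d(P_{f(X)}\times P_{F(X)})}$. Then for every $M\in\mathbb N$ and every $a>0$ such that $Me^{-a}+P_{f(X)F(X)}(i_{f(X)F(X)}\le a)<\frac14$, and for any $\epsilon\in(0,\frac12)$, $\lambda\in(0,\frac12)$ with $\epsilon\lambda=Me^{-a}+P_{f(X)F(X)}(i_{f(X)F(X)}\le a)$, there exist points $y_1,\dots,y_M\in B^{\mathbb N}$, pairwise disjoint sets $\Gamma_1,\dots,\Gamma_M\in\mathcal B_{C^{\mathbb N}}$ and sets $A_k\in\mathcal B_{A^{\mathbb N}}$ with $A_k\subset f^{-1}(y_k)$ such that for all $k=1,\dots,M$: $P_{X|f(X)}(A_k\mid y_k)>1-\lambda$, and $P_{F(X)|X}(\Gamma_k^c\mid x)\le\epsilon$ for all $x\in A_k$.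
   Context: Sequence spaces $A^{\mathbb N},B^{\mathbb N},C^{\mathbb N}$ carry product $\sigma$-fields. A source $[A,X]$ is a random process with distribution $P_X$ on $A^{\mathbb N}$. A channel $[A,F,C]$ is a probability kernel $F(x,H)=P_{F(X)|X}(H|x)$. Given a measurable $f:A^{\mathbb N}\to B^{\mathbb N}$ and a channel $[A,F,C]$, the noisy computation $[A,f\times F,B\times C]$ is the channel product with kernel $(x,G\times H)\mapsto 1_{f^{-1}(G)}(x)F(x,H)$; fed by $X$ it determines the joint process $(X,f(X),F(X))$ with law $P(E\times G\times H)=\int_E1_G(f(x))F(x,H)\,dP_X(x)$, and $P_{f(X)F(X)}$, $P_{f(X)}$, $P_{F(X)}$ denote the corresponding marginals. $P_{X|f(X)}(\cdot|y)$ denotes a regular conditional distribution of $X$ given $f(X)=y$ (singletons of $B^{\mathbb N}$ are measurable since $B$ is countable). *)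

(* Defs.v *)
From HB Require Import structures.
From mathcomp Require Import all_boot all_order all_algebra.
From mathcomp Require Import all_classical all_reals all_analysis measurable_realfun.
Set Implicit Arguments. Unset Strict Implicit. Unset Printing Implicit Defensive.
Import Order.TTheory GRing.Theory Num.Theory.
Import numFieldNormedType.Exports.
Local Open Scope classical_set_scope.
Local Open Scope ring_scope.

Definition standard_borel (R : realType) d (T : measurableType d) : Prop :=
  exists (S : set R) (phi : T -> R) (psi : R -> T),
    [/\ measurable S, measurable_fun setT phi, measurable_fun S psi,
        (forall x, S (phi x) /\ psi (phi x) = x) &
        (forall r, S r -> phi (psi r) = r)].

Definition seq_gen d (T : measurableType d) : set (set (nat -> T)) :=
  [set E | exists n : nat, exists2 S : set T, measurable S &
                                   E = (fun x => x n) @^-1` S].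

Definition seqspace d (T : measurableType d) := g_sigma_algebraType (@seq_gen d T).

Local Open Scope ereal_scope.

Section outdist.
Context d d' (X : measurableType d) (Y : measurableType d') (R : realType)
  (P : probability X R) (F : R.-pker X ~> Y).

Definition outdist (H : set Y) : \bar R := \int[P]_x F x H.

Let outdist0 : outdist set0 = 0.
Proof. by apply: integral0_eq => x _; rewrite measure0. Qed.

Let outdist_ge0 H : 0 <= outdist H.
Proof. by apply: integral_ge0 => x _; exact: measure_ge0. Qed.

Let outdist_sigma_additive : semi_sigma_additive outdist.
Proof.
move=> U mU tU mUU; rewrite [X in _ --> X](_ : _ =
  \int[P]_x (\sum_(n <oo) F x (U n))); last first.
  apply: eq_integral => V _.
  by apply/esym/cvg_lim => //; exact/measure_semi_sigma_additive.
apply/cvg_closeP; split.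
  by apply: is_cvg_nneseries => n _ _; exact: integral_ge0.
rewrite closeE// integral_nneseries// => n.
exact: (measurable_kernel F _ (mU n)).
Qed.

HB.instance Definition _ := isMeasure.Build _ _ R
  outdist outdist0 outdist_ge0 outdist_sigma_additive.

Let outdist_setT : outdist setT = 1.
Proof.
rewrite /outdist (eq_integral (cst 1)); last by move=> x _; rewrite prob_kernel.
rewrite integral_cst// mul1e; exact: probability_setT.
Qed.

HB.instance Definition _ := Measure_isProbability.Build _ _ R outdist outdist_setT.

End outdist.

(* Joint law P_{f(X)F(X)} of the noisy computation fed by X:
   P_{f(X)F(X)}(W) = \int F(x, {c | (f x, c) \in W}) dP_X(x),
   the unique measure with P(G x H) = \int 1_G(f x) F(x,H) dP_X(x). *)
Definition joint_out d dB d' (X : measurableType d) (B : measurableType dB)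
  (Y : measurableType d') (R : realType)
  (P : probability X R) (f : X -> B) (F : R.-pker X ~> Y)
  (W : set (B * Y)) : \bar R :=
  \int[P]_x F x [set c | W (f x, c)].

Definition is_RN_derivative d (T : measurableType d) (R : realType)
  (nu : set T -> \bar R) (mu : {measure set T -> \bar R}) (g : T -> \bar R) :=
  [/\ measurable_fun [set: T] g, (forall z, 0 <= g z) &
      forall W, measurable W -> nu W = \int[mu]_(z in W) g z].

Definition eln (R : realType) (z : \bar R) : \bar R :=
  match z with
  | r%:E => if (0 < r)%R then (ln r)%:E else -oo
  | +oo => +oo
  | -oo => -oo
  end.

Definition is_rcd d dB (X : measurableType d) (B : measurableType dB)
  (R : realType) (P : probability X R) (f : {mfun X >-> B})
  (Q : R.-pker B ~> X) :=
  forall E G, measurable E -> measurable G ->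
    P (E `&` f @^-1` G) = \int[distribution P f]_(y in G) Q y E.

(* Main.v *)
Require Import Defs.
From HB Require Import structures.
From mathcomp Require Import all_boot all_order all_algebra.
From mathcomp Require Import all_classical all_reals all_analysis measurable_realfun.
From mathcomp Require Import lra.
Import Order.TTheory GRing.Theory Num.Theory.
Local Open Scope classical_set_scope.
Local Open Scope ring_scope.
Local Open Scope ereal_scope.
Set Implicit Arguments. Unset Strict Implicit.

Lemma null_bigcup d (T : measurableType d) (R : realType)
  (mu : {measure set T -> \bar R}) (F : nat -> set T) (A : set T) :
  measurable A -> (forall n, measurable (F n)) -> (forall n, mu (F n) = 0) ->
  A `<=` \bigcup_n F n -> mu A = 0.
Proof.
move=> mA mF F0 AF; apply/eqP; rewrite eq_le measure_ge0 andbT.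
apply: le_trans (measure_sigma_subadditive mu mF mA AF) _.
by rewrite eseries0.
Qed.

Lemma mpre_gt d (T : measurableType d) (R : realType) (h : T -> \bar R) (e : \bar R) :
  measurable_fun setT h -> measurable [set y | e < h y].
Proof.
move=> mh; have := mh measurableT `]e, +oo[%classic (emeasurable_itv _).
rewrite setTI; congr measurable; apply/seteqP; split => y /=;
  by rewrite in_itv/= andbT.
Qed.

Lemma mpre_le d (T : measurableType d) (R : realType) (h : T -> \bar R) (e : \bar R) :
  measurable_fun setT h -> measurable [set y | h y <= e].
Proof.
move=> mh; have := mh measurableT `]-oo, e]%classic (emeasurable_itv _).
rewrite setTI; congr measurable; apply/seteqP; split => y /=;
  by rewrite in_itv/=.
Qed.

Lemma prob_real d (T : measurableType d) (R : realType) (mu : probability T R)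
  (A : set T) : measurable A -> exists r, mu A = r%:E /\ (0 <= r)%R.
Proof.
move=> mA; have hf : mu A \is a fin_num := fin_num_measure mu _ mA.
exists (fine (mu A)); rewrite fineK//; split => //.
by rewrite fine_ge0// measure_ge0.
Qed.

Lemma null_of_bound d (T : measurableType d) (R : realType)
  (mu : probability T R) (h : T -> \bar R) (D : set T) (c : R) :
  (0 <= c)%R -> measurable D -> measurable_fun setT h -> (forall y, 0 <= h y) ->
  (forall G, measurable G -> G `<=` D ->
     \int[mu]_(y in G) h y <= c%:E * mu G) ->
  mu (D `&` [set y | c%:E < h y]) = 0.
Proof.
move=> c0 mD mh h0 hb.
pose G n := D `&` [set y | (c + n.+1%:R^-1)%:E < h y].
have mG n : measurable (G n).
  by apply: measurableI => //; exact: mpre_gt.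
have mDc : measurable (D `&` [set y | c%:E < h y]).
  by apply: measurableI => //; exact: mpre_gt.
apply: (@null_bigcup _ _ _ mu G _ mDc mG).
  move=> n; have := hb _ (mG n) (@subIsetl _ _ _).
  have : (c + n.+1%:R^-1)%:E * mu (G n) <= \int[mu]_(y in G n) h y.
    rewrite -(integral_cst mu (mG n)); apply: ge0_le_integral => //.
    - by move=> y _; rewrite lee_fin addr_ge0//.
    - exact: measurable_funS mh.
    - by move=> y [_ /= /ltW].
  have [r [Er r0]] := @prob_real _ _ _ mu _ (mG n); rewrite Er => h1 h2.
  have := le_trans h1 h2; rewrite lee_fin => h3.
  have h4 : (n.+1%:R^-1 * r <= 0)%R by rewrite mulrDl gerDl in h3.
  have hp : (0 < n.+1%:R^-1 :> R)%R by rewrite invr_gt0 ltr0n.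
  apply: (etrans Er); congr (_%:E); apply/eqP; rewrite eq_le r0 andbT.
  by rewrite -(pmulr_rle0 _ hp).
move=> y [Dy /= cy]; move: cy; case Ehy: (h y) => [r| |] cy.
- rewrite lte_fin in cy; have [k hk] := ltr_add_invr cy; exists k => //.
  by split => //=; rewrite Ehy lte_fin.
- by exists 0%N => //; split => //=; rewrite Ehy ltry.
- by [].
Qed.

Lemma pker_le1 (R : realType) d d' (X : measurableType d) (Y : measurableType d')
  (k : R.-pker X ~> Y) x (A : set Y) : measurable A -> k x A <= 1.
Proof.
move=> mA; rewrite -(@prob_kernel _ _ _ _ _ k x); apply: le_measure; rewrite ?inE//.
Qed.

Section gen.
Context (R : realType) dX dY dZ (X : measurableType dX) (Y : measurableType dY)
  (Z : measurableType dZ) (P : probability X R) (f : {mfun X >-> Z})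
  (F : R.-pker X ~> Y).

Lemma meas_sec (W : set (Z * Y)) : measurable W ->
  measurable_fun setT (fun x => F x [set c | W (f x, c)]).
Proof.
move=> mW.
pose W' := (fun p : X * Y => (f p.1, p.2)) @^-1` W.
have mW' : measurable W'.
  have mp : measurable_fun setT (fun p : X * Y => (f p.1, p.2)).
    apply: measurable_fun_pair; last exact: measurable_snd.
    exact: measurableT_comp (measurable_funPT f) measurable_fst.
  by rewrite -[W']setTI; exact: mp.
have := @measurable_fun_xsection_finite_kernel _ _ _ _ R F W'.
rewrite inE => /(_ mW'); congr measurable_fun; apply/funext => x.
by congr (F x _); apply/seteqP; split => c; rewrite /xsection/= inE.
Qed.

Lemma joint_ge0 W : 0 <= joint_out P f F W.
Proof. by apply: integral_ge0 => x _; exact: measure_ge0. Qed.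

Lemma msec (W : set (Z * Y)) z : measurable W -> measurable [set c | W (z, c)].
Proof.
move=> mW; have := measurable_xsection z mW; congr measurable.
by apply/seteqP; split => c; rewrite /xsection/= inE.
Qed.

Lemma joint_le W1 W2 : measurable W1 -> measurable W2 -> W1 `<=` W2 ->
  joint_out P f F W1 <= joint_out P f F W2.
Proof.
move=> mW1 mW2 W12; apply: ge0_le_integral => //.
- exact: meas_sec.
- exact: meas_sec.
- move=> x _; apply: (le_measure (F x)); rewrite ?inE; try exact: msec.
  by move=> c /=; exact: W12.
Qed.

Lemma joint_U W1 W2 : measurable W1 -> measurable W2 ->
  joint_out P f F (W1 `|` W2) <= joint_out P f F W1 + joint_out P f F W2.
Proof.
move=> mW1 mW2; rewrite /joint_out -ge0_integralD//; last 2 first.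
- exact: meas_sec.
- exact: meas_sec.
apply: ge0_le_integral => //.
- by apply: meas_sec; exact: measurableU.
- apply: emeasurable_funD; exact: meas_sec.
- move=> x _; rewrite (_ : [set c | _] = [set c | W1 (f x, c)] `|` [set c | W2 (f x, c)]) //.
  by apply: measureU2; exact: msec.
Qed.

Lemma joint_GT G : measurable G ->
  joint_out P f F (G `*` setT) = distribution P f G.
Proof.
move=> mG; rewrite /joint_out /distribution /pushforward.
transitivity (\int[P]_x (\1_(f @^-1` G) x)%:E).
  apply: eq_integral => x _; rewrite indicE.
  have [hx|hx] := boolP (x \in f @^-1` G).
    rewrite (_ : [set c | _] = setT) ?prob_kernel//.
    by apply/seteqP; split => c //= _; split => //; rewrite inE in hx.
  rewrite (_ : [set c | _] = set0) ?measure0//.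
  apply/seteqP; split => c //= [] Gf _; move/negP: hx; apply.
  by rewrite inE; exact: Gf.
rewrite integral_indic ?setIT//.
by rewrite -[X in measurable X]setTI; exact: measurable_funPT.
Qed.

Lemma joint_TU U : joint_out P f F (setT `*` U) = outdist P F U.
Proof.
rewrite /joint_out /outdist; apply: eq_integral => x _; congr (F x _).
by apply/seteqP; split => c //= [].
Qed.


Lemma Tc_eq (g : Z * Y -> \bar R) (a : R) : (forall z, 0 <= g z) ->
  [set z | eln (g z) <= a%:E] = [set z | g z <= (expR a)%:E].
Proof.
move=> g0; apply/seteqP; split => z /=; have := g0 z;
  case: (g z) => [r| |] //= r0.
- case: ifPn => r0'; last by move=> _; rewrite lee_fin; apply: le_trans (ltW (expR_gt0 a)); rewrite leNgt.
  by rewrite !lee_fin => h; rewrite -(lnK r0') ler_expR.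
- case: ifPn => r0'; last by rewrite leNye.
  by rewrite !lee_fin => h; rewrite -ler_expR lnK.
Qed.

Section dens.
Variables (g : Z * Y -> \bar R)
  (hg : is_RN_derivative (joint_out P f F) (distribution P f \x outdist P F) g)
  (a : R).

Let mu := distribution P f.
Let nu := outdist P F.
Let Tc := [set z | eln (g z) <= a%:E].

Lemma mTc : measurable Tc.
Proof.
case: hg => mg g0 _; rewrite /Tc Tc_eq//; exact: mpre_le.
Qed.

Lemma dens_bound :
  mu [set y | (expR (- a))%:E < nu (xsection (~` Tc) y)] = 0.
Proof.
case: hg => mg g0 hJ.
have mT : measurable (~` Tc) by apply: measurableC; exact: mTc.
have Teq : ~` Tc = [set z | (expR a)%:E < g z].
  by rewrite /Tc Tc_eq//; apply/seteqP; split => z /=; rewrite ltNge => /negP.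
pose h y := nu (xsection (~` Tc) y).
have mh : measurable_fun setT h by exact: measurable_fun_xsection.
rewrite -[X in mu X]setTI.
apply: null_of_bound => //.
move=> G mG _.
have mTG : measurable (~` Tc `&` G `*` setT) by apply: measurableI => //; exact: measurableX.
have E1 : (mu \x nu) (~` Tc `&` G `*` setT) = \int[mu]_(y in G) h y.
  rewrite /product_measure1 [RHS]integral_mkcond; apply: eq_integral => y _.
  rewrite patchE /= xsectionI; case: ifPn => yG.
    by rewrite in_xsectionX// setIT.
  by rewrite notin_xsectionX// setI0 /nu measure0.
have E2 : (expR a)%:E * (mu \x nu) (~` Tc `&` G `*` setT) <= mu G.
  rewrite /mu -(joint_GT mG); apply: le_trans (joint_le mTG _ _); last 2 first.
  - by apply: measurableX.
  - exact: subIsetr.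
  rewrite (hJ _ mTG) -integral_cst//; apply: ge0_le_integral => //.
  - by move=> z _; rewrite lee_fin ltW// expR_gt0.
  - exact: measurable_funS mg.
  - by move=> z [] + _; rewrite Teq /= => /ltW.
rewrite -E1.
set Xm := (mu \x nu) _ in E2 *.
have -> : Xm = (expR (- a))%:E * ((expR a)%:E * Xm).
  by rewrite muleA -EFinM -expRD addNr expR0 mul1e.
by apply: lee_wpmul2l => //; rewrite lee_fin ltW// expR_gt0.
Qed.

Section step.
Variables (Q : R.-pker Z ~> X)
  (hQ : forall E, measurable E -> P E = \int[mu]_y Q y E)
  (hsing : forall z : Z, measurable [set z])
  (N : set Z) (mN : measurable N) (N0 : mu N = 0)
  (hN : forall y, ~ N y -> Q y (~` (f @^-1` [set y])) = 0 /\
                          nu (xsection (~` Tc) y) <= (expR (- a))%:E)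
  (M : nat) (eps lam : R) (eps0 : (0 <= eps)%R) (lam0 : (0 <= lam)%R)
  (lam1 : (lam <= 1)%R)
  (hel : (eps * lam)%:E = (M%:R * expR (- a))%:E + joint_out P f F Tc).

Lemma sum_cst_le (k : nat) (Gs : nat -> set Y) :
  (forall i, (i < k)%N -> nu (Gs i) <= (expR (- a))%:E) ->
  \sum_(i < k) nu (Gs i) <= (k%:R * expR (- a))%:E.
Proof.
elim: k => [|k IH] h; first by rewrite big_ord0 mul0r.
rewrite big_ord_recr /= -natr1 mulrDl mul1r EFinD leeD//.
  by apply: IH => i ik; apply: h; rewrite ltnS ltnW.
exact: h.
Qed.

Lemma step (k : nat) (Gs : nat -> set Y) : (k < M)%N ->
  (forall i, (i < k)%N -> measurable (Gs i) /\ nu (Gs i) <= (expR (- a))%:E) ->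
  exists y G A, [/\ measurable G, nu G <= (expR (- a))%:E,
    (forall i, (i < k)%N -> Gs i `&` G = set0), measurable A &
    [/\ A `<=` f @^-1` [set y], (1 - lam)%:E < Q y A &
    forall x, A x -> F x (~` G) <= eps%:E]].
Proof.
move=> kM hGs.
pose U := \bigcup_(i < k) Gs i.
have mU : measurable U by apply: bigcup_measurable => i ik; exact: (hGs i ik).1.
have nuU : nu U <= (k%:R * expR (- a))%:E.
  apply: le_trans (sum_cst_le (fun i ik => (hGs i ik).2)).
  apply: content_subadditive => //; first by move=> i ik; exact: (hGs i ik).1.
  by rewrite -bigcup_mkord.
apply: contrapT => hno.
pose W := Tc `|` (setT `*` U).
have mW : measurable W by apply: measurableU; [exact: mTc|exact: measurableX].
pose phi x := F x [set c | W (f x, c)].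
have mphi : measurable_fun setT phi by exact: meas_sec.
pose D := [set x | phi x <= eps%:E].
have mD : measurable D by exact: mpre_le.
have mfy y : measurable (f @^-1` [set y]).
  by rewrite -[X in measurable X]setTI; exact: measurable_funPT.
have hy : forall y, ~ N y -> Q y D <= (1 - lam)%:E.
  move=> y Ny; have [Qy nuy] := hN Ny.
  pose A := D `&` f @^-1` [set y].
  pose G := xsection (~` Tc) y `\` U.
  have mA : measurable A by exact: measurableI.
  have hA : Q y A <= (1 - lam)%:E.
    rewrite leNgt; apply/negP => hlt; apply: hno; exists y, G, A; split => //.
    - apply: measurableD => //; apply: measurable_xsection.
      by apply: measurableC; exact: mTc.
    - apply: le_trans nuy; apply: le_measure; rewrite ?inE.
      + apply: measurableD => //; apply: measurable_xsection.
        by apply: measurableC; exact: mTc.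
      + by apply: measurable_xsection; apply: measurableC; exact: mTc.
      + exact: subDsetl.
    - move=> i ik; apply/seteqP; split => // c [Gic [_ /= nU]].
      by apply: nU; exists i.
    - split => //; first exact: subIsetr.
      move=> x [Dx /= fxy]; apply: le_trans Dx; rewrite /phi fxy.
      apply: le_measure; rewrite ?inE.
      + apply: measurableC; apply: measurableD => //; apply: measurable_xsection.
        by apply: measurableC; exact: mTc.
      + exact: msec.
      + move=> c /= nG; rewrite /W /=.
        have [Tcy|nTcy] := pselect (Tc (y, c)); first by left.
        right; split => //; apply: contrapT => nUc; apply: nG; split => //.
        by rewrite /xsection/= inE.
  apply: le_trans hA.
  have -> : Q y D = Q y (A `|` (D `&` ~` (f @^-1` [set y]))).
    by rewrite -setIUr setUCr setIT.
  apply: le_trans (measureU2 _ _ _) _ => //.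
    by apply: measurableI => //; exact: measurableC.
  have : Q y (D `&` ~` (f @^-1` [set y])) <= 0.
    rewrite -Qy; apply: le_measure; rewrite ?inE //.
    + by apply: measurableI => //; exact: measurableC.
    + exact: measurableC.
  by move=> h; rewrite -[leRHS]adde0 leeD.
have PD : P D <= (1 - lam)%:E.
  have l0 : (0 <= 1 - lam)%R by rewrite subr_ge0.
  have -> : (1 - lam)%:E = \int[mu]_y ((1 - lam)%:E + (\1_N y)%:E).
    rewrite ge0_integralD//; last first.
      by apply/measurable_EFinP; exact: measurable_indic.
    rewrite integral_cst// integral_indic// setIT.
    have N0' : distribution P f N = 0 := N0.
    rewrite [Xp in _ + Xp](_ : _ = 0); last exact: N0.
    rewrite [Xp in _ * Xp](_ : _ = 1); last exact: probability_setT.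
    by rewrite adde0 mule1.
  rewrite (hQ mD); apply: ge0_le_integral => //.
  - exact: measurable_kernel.
  - apply: emeasurable_funD; first exact: measurable_cst.
    by apply/measurable_EFinP; exact: measurable_indic.
  - move=> y _; have [Ny|Ny] := pselect (N y).
      rewrite indicE mem_set// -EFinD; apply: le_trans (pker_le1 Q y mD) _.
      rewrite lee_fin /=; lra.
    by rewrite indicE memNset// adde0; exact: hy.
have mcD : measurable (~` D) by exact: measurableC.
have PcD : lam%:E <= P (~` D).
  rewrite probability_setC//; have [r [Er r0]] := @prob_real _ _ _ P _ mD.
  rewrite Er -EFinB lee_fin; rewrite Er lee_fin in PD; lra.
have Mk : eps%:E * P (~` D) <= joint_out P f F W.
  rewrite -(integral_cst P mcD).
  have h1 := ge0_subset_integral P mcD measurableT mphi (fun x _ => measure_ge0 _ _) (@subsetT _ _).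
  apply: le_trans h1; apply: ge0_le_integral => //.
  - exact: measurable_funS mphi.
  - by move=> x /= /negP; rewrite -ltNge => /ltW.
have JW : joint_out P f F W <= joint_out P f F Tc + (k%:R * expR (- a))%:E.
  apply: le_trans (joint_U mTc (measurableX measurableT mU)) _.
  by rewrite joint_TU leeD.
have := le_trans (le_trans (lee_wpmul2l _ PcD) Mk) JW.
rewrite -EFinM hel lee_fin => /(_ eps0).
have J0 := joint_ge0 Tc.
have [j Ej] : exists j, joint_out P f F Tc = j%:E.
  move: J0 hel; case: (joint_out P f F Tc) => [j| |] //; first by move=> _ _; exists j.
rewrite Ej -!EFinD lee_fin => hh.
have e0 : (0 < expR (- a))%R by exact: expR_gt0.
have : (M%:R * expR (- a) <= k%:R * expR (- a))%R by lra.
rewrite ler_pM2r// ler_nat => kM'.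
by move: kM; rewrite ltnNge kM'.
Qed.

Definition inv k (ys : nat -> Z) (Gs : nat -> set Y) (As : nat -> set X) :=
  forall j, (j < k)%N -> [/\ measurable (Gs j), nu (Gs j) <= (expR (- a))%:E,
    (forall i, (i < j)%N -> Gs i `&` Gs j = set0), measurable (As j) &
    [/\ As j `<=` f @^-1` [set ys j], (1 - lam)%:E < Q (ys j) (As j) &
    forall x, As j x -> F x (~` Gs j) <= eps%:E]].

Lemma greedy k : (k <= M)%N -> exists ys Gs As, inv k ys Gs As.
Proof.
elim: k => [|k IH] kM.
  by exists (fun _ => point), (fun _ => set0), (fun _ => set0) => j.
have [ys [Gs [As hinv]]] := IH (ltnW kM).
have [y [G [A [mG nuG dG mA [Af QA FA]]]]] := @step k Gs kM
  (fun i ik => let: And5 h1 h2 _ _ _ := hinv i ik in conj h1 h2).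
exists (fun j => if j == k then y else ys j),
  (fun j => if j == k then G else Gs j),
  (fun j => if j == k then A else As j) => j; rewrite ltnS leq_eqVlt.
case/orP => [/eqP ->|jk]; first rewrite eqxx.
  split => // i ik; rewrite (ltn_eqF ik); exact: dG.
rewrite (ltn_eqF jk); have [h1 h2 h3 h4 h5] := hinv j jk; split => //.
by move=> i ij; rewrite (ltn_eqF (ltn_trans ij jk)); exact: h3.
Qed.

End step.

End dens.

End gen.

Section seqs.
Context (R : realType) dB (B : measurableType dB) (stdB : standard_borel R B).

Lemma B_set1 (b : B) : measurable [set b].
Proof.
case: stdB => S [phi [psi [mS mphi mpsi h1 h2]]].
have -> : [set b] = phi @^-1` [set phi b].
  apply/seteqP; split => x /=; first by move->.
  by move=> e; rewrite -(h1 x).2 e (h1 b).2.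
by rewrite -[X in measurable X]setTI; apply: mphi => //; exact: measurable_set1.
Qed.

Lemma cyl_meas n (b : B) : measurable [set y : seqspace B | y n = b].
Proof.
apply: sub_sigma_algebra; exists n, [set b]; first exact: B_set1.
by apply/seteqP; split.
Qed.

Lemma seq_set1 (y : seqspace B) : measurable [set y].
Proof.
have -> : [set y] = \bigcap_n [set z : seqspace B | z n = y n].
  apply/seteqP; split => z /=; first by move=> -> n.
  by move=> h; apply/funext => n; exact: h.
by apply: bigcapT_measurable => n; exact: cyl_meas.
Qed.

End seqs.

Unset Implicit Arguments. Set Strict Implicit.
Local Close Scope ereal_scope.

Theorem lemma14 (R : realType) (dA dB dC : measure_display)
  (A : measurableType dA) (B : measurableType dB) (C : measurableType dC)
  (stdA : standard_borel R A) (stdB : standard_borel R B)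
  (cntB : countable [set: B]) (stdC : standard_borel R C)
  (f : {mfun seqspace A >-> seqspace B})
  (F : R.-pker seqspace A ~> seqspace C)
  (P : probability (seqspace A) R)
  (hac : joint_out P f F `<< (distribution P f \x outdist P F)%E)
  (g : seqspace B * seqspace C -> \bar R)
  (hg : is_RN_derivative (joint_out P f F)
          (distribution P f \x outdist P F)%E g)
  (Q : R.-pker seqspace B ~> seqspace A) (hQ : is_rcd P f Q)
  (M : nat) (a eps lam : R) (ha : 0 < a)
  (hsmall : ((M%:R * expR (- a))%:E
             + joint_out P f F [set z | eln (g z) <= a%:E] < (4^-1)%:E)%E)
  (heps : 0 < eps < 2^-1) (hlam : 0 < lam < 2^-1)
  (hel : (eps * lam)%:E = ((M%:R * expR (- a))%:E
             + joint_out P f F [set z | eln (g z) <= a%:E])%E) :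
  exists (y : 'I_M -> seqspace B) (Gam : 'I_M -> set (seqspace C))
         (Ak : 'I_M -> set (seqspace A)),
    [/\ forall k, measurable (Gam k),
        forall k l, k != l -> Gam k `&` Gam l = set0 &
        forall k,
          [/\ measurable (Ak k),
              Ak k `<=` f @^-1` [set y k],
              ((1 - lam)%:E < Q (y k) (Ak k))%E &
              forall x, Ak k x -> (F x (~` Gam k) <= eps%:E)%E]].
Proof.
have hQ' : forall E, measurable E -> P E = (\int[distribution P f]_y Q y E)%E.
  by move=> E mE; have := hQ E setT mE measurableT; rewrite preimage_setT setIT.
have hsing := @seq_set1 R dB B stdB.
have /countable_injP [e einj] := cntB.
pose Zc n (b : B) := [set y : seqspace B | y n = b].
have mZc n b : measurable (Zc n b) by exact: (cyl_meas stdB).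
have mfZ n b : measurable (f @^-1` (~` Zc n b)).
  rewrite -[X in measurable X]setTI; apply: measurable_funPT => //.
  exact: measurableC.
pose hh n b y := Q y (f @^-1` (~` Zc n b)).
have mhh n b : measurable_fun setT (hh n b) by exact: measurable_kernel.
pose Nnb n b := Zc n b `&` [set y | (0%R%:E < hh n b y)%E].
have mNnb n b : measurable (Nnb n b).
  by apply: measurableI => //; exact: mpre_gt.
have Nnb0 n b : distribution P f (Nnb n b) = 0%R.
  apply: null_of_bound => //.
  move=> G mG GZ; rewrite mul0e -(hQ _ _ (mfZ n b) mG).
  rewrite (_ : _ `&` _ = set0) ?measure0//.
  by apply/seteqP; split => // x [/= nZ /GZ].
pose S n m := [set y | exists b, e b = m /\ Nnb n b y].
have SE n m : S n m = set0 \/ exists b, S n m = Nnb n b.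
  have [[b eb]|nb] := pselect (exists b, e b = m).
    right; exists b; apply/seteqP; split => y /=; last by move=> h; exists b.
    move=> [b' [eb' h]]; have bb : b' = b.
      by apply: einj; rewrite ?inE// eb eb'.
    by rewrite -bb.
  left; apply/seteqP; split => y //= [b [eb _]]; apply: nb; by exists b.
have mS n m : measurable (S n m).
  by case: (SE n m) => [->|[b ->]].
have S0 n m : distribution P f (S n m) = 0%R.
  by case: (SE n m) => [->|[b ->]]; rewrite ?measure0.
pose Tc := [set z | (eln (g z) <= a%:E)%E].
pose N1 := [set y | ((expR (- a))%:E < outdist P F (xsection (~` Tc) y))%E].
have mN1 : measurable N1.
  apply: mpre_gt; apply: measurable_fun_xsection; apply: measurableC.
  exact: (mTc hg).
pose N := N1 `|` \bigcup_n \bigcup_m S n m.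
have mN : measurable N.
  by apply: measurableU => //; apply: bigcupT_measurable => n;
    apply: bigcupT_measurable => m.
have N0 : distribution P f N = 0%R.
  apply: (@null_bigcup _ _ _ _ (fun n => N1 `|` \bigcup_m S n m)) => //.
  - by move=> n; apply: measurableU => //; apply: bigcupT_measurable.
  - move=> n; apply/eqP; rewrite eq_le measure_ge0 andbT.
    apply: le_trans (measureU2 _ _ _) _ => //; first exact: bigcupT_measurable.
    rewrite [Xp in (Xp + _)%E](_ : _ = 0%R); last exact: (dens_bound hg a).
    rewrite [Xp in (_ + Xp)%E](_ : _ = 0%R) ?adde0//.
    apply: (@null_bigcup _ _ _ _ (S n)) => //; [exact: bigcupT_measurable|move=> m; exact: S0].
  - move=> y [N1y|[n _ [m _ Sy]]]; first by exists 0%N => //; left.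
    by exists n => //; right; exists m.
have hN : forall y, ~ N y -> Q y (~` (f @^-1` [set y])) = 0%R /\
    (outdist P F (xsection (~` Tc) y) <= (expR (- a))%:E)%E.
  move=> y Ny; split; last by rewrite leNgt; apply/negP => h; apply: Ny; left.
  apply: (@null_bigcup _ _ _ (Q y) (fun n => f @^-1` (~` Zc n (y n)))) => //.
  - apply: measurableC; rewrite -[X in measurable X]setTI.
    by apply: measurable_funPT.
  - move=> n; apply/eqP; rewrite eq_le measure_ge0 andbT leNgt; apply/negP => h.
    apply: Ny; right; exists n => //; exists (e (y n)) => //.
    by exists (y n); split => //; split.
  - move=> x /= nfx; apply: contrapT => hx; apply: nfx; apply/funext => n.
    by apply: contrapT => hn; apply: hx; exists n.
have lam1 : (lam <= 1)%R.
  by case/andP: hlam => _ /ltW h; apply: le_trans h _; rewrite invf_le1// ler1n.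
have eps0 : (0 <= eps)%R by case/andP: heps => /ltW.
have [ys [Gs [As hinv]]] := greedy hg hQ' hsing mN N0 hN eps0 lam1 hel (leqnn M).
exists (fun k : 'I_M => ys k), (fun k : 'I_M => Gs k), (fun k : 'I_M => As k).
split.
- by move=> k; have [] := hinv k (ltn_ord k).
- move=> k l kl; have [klt|lkt|kl'] := ltngtP k l.
  + by have [_ _ h _ _] := hinv l (ltn_ord l); exact: h.
  + by have [_ _ h _ _] := hinv k (ltn_ord k); rewrite setIC; exact: h.
  + by move: kl; rewrite (val_inj kl') eqxx.
- move=> k; have [_ _ _ h4 [h5 h6 h7]] := hinv k (ltn_ord k); split => //.
Qed.
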